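(* Consider the discrete-time system with sensor and actuator attacks described in the context. Let $q_1,q_2$ be the largest integers such that for every $J_u\subset\{1,\dots,n_u\}$ with $\card(J_u)\le 2q_1<n_u$ and every $J_s\subset\{1,\dots,n_y\}$ with $\card(J_s)\ge n_y-2q_2>0$ a partial UIO for the pair $(J_u,J_s)$ exists, and suppose $\card(W_u)\le q_1<\frac{n_u}{2}$ and $\card(W_y)\le q_2<\frac{n_y}{2}$. Run a partial UIO $\hat x_{J_{us}}$ for each pair $(J_u,J_s)$ with $\card(J_u)=q_1$, $\card(J_s)=n_y-q_2$, and a partial UIO $\hat x_{S_{us}}$ for each pair $(S_u,S_s)$ with $\card(S_u)=2q_1$, $\card(S_s)=n_y-2q_2$. For $k\ge0$ and each such $(J_u,J_s)$ define $$\pi_{J_{us}}(k)=\max_{S_u\supset J_u,\ \card(S_u)=2q_1;\ S_s\subset J_s,\ \card(S_s)=n_y-2q_2}|\hat x_{J_{us}}(k)-\hat x_{S_{us}}(k)|,$$ let $(\sigma_u(k),\sigma_s(k))$ be a minimizer of $\pi_{J_{us}}(k)$ over all pairs $(J_u,J_s)$ with $\card(J_u)=q_1$, $\card(J_s)=n_y-q_2$, and set $\hat x(k)=\hat x_{\sigma_{us}(k)}(k)$, the estimate of the partial UIO indexed by $(\sigma_u(k),\sigma_s(k))$. Define $e(k)=\hat x_{\sigma_{us}(k)}(k)-x(k)$. Then there exists a class-$\mathcal{KL}$ function $\bar\beta$ such that $$|e(k)|\le\bar\beta(e_0,k)\quad\text{for all }k\ge0,\qquad e_0:=\max_{(J_u,J_s),(S_u,S_s)}\{|e_{J_{us}}(0)|,|e_{S_{us}}(0)|\},$$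 the maximum being over all pairs of the two kinds above, with $e_{J_{us}}=\hat x_{J_{us}}-x$, $e_{S_{us}}=\hat x_{S_{us}}-x$.
   Context: System: $x(k+1)=f(x(k))+B(u(k)+a_u(k))$, $y(k)=h(x(k))+a_y(k)$, $k\in\mathbb{N}$, with state $x\in\mathbb{R}^n$, known input $u\in\mathbb{R}^{n_u}$, actuator attack $a_u=(a_{u1},\dots,a_{un_u})^\top$, output $y\in\mathbb{R}^{n_y}$, sensor attack $a_y=(a_{y1},\dots,a_{yn_y})^\top$ (attacks may be arbitrarily large), $f:\mathbb{R}^n\to\mathbb{R}^n$, $h:\mathbb{R}^n\to\mathbb{R}^{n_y}$, $B=[b_1,\dots,b_{n_u}]\in\mathbb{R}^{n\times n_u}$ of full column rank. Attacked sets: $W_u=\{i:a_{ui}(k)\ne0\text{ for some }k\ge0\}$, $W_y=\{i:a_{yi}(k)\ne0\text{ for some }k\ge0\}$ (unknown, time-invariant), so $\supp(a_u(k))\subseteq W_u$, $\supp(a_y(k))\subseteq W_y$ for all $k$. For index sets $J$, $y^J,a_y^J,a_u^J$ denote subvectors indexed by $J$ and $b_J$ the matrix with columns $b_i$, $i\in J$. A partial UIO for the pair $(J_u,J_s)$ (an unknown input observer for $x(k+1)=f(x)+Bu+b_{J_u}a_u^{J_u}$, $y^{J_s}=h^{J_s}(x)+a_y^{J_s}$ with unknown input $a_u^{J_u}$) is a system $\hat x_{J_{us}}(k+1)=f_{J_{us}}(\hat x_{J_{us}}(k),u(k),y^{J_s}(k),y^{J_s}(k+1))$, $f_{J_{us}}:\mathbb{R}^n\times\mathbb{R}^{n_u}\times\mathbb{R}^{\card(J_s)}\times\mathbb{R}^{\card(J_s)}\to\mathbb{R}^n$,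 such that, with $e_{J_{us}}=\hat x_{J_{us}}-x$, there is a class-$\mathcal{KL}$ function $\beta_{J_{us}}$ with $|e_{J_{us}}(k)|\le\beta_{J_{us}}(|e_{J_{us}}(0)|,k)$ for all $k\ge0$, for all initial conditions $x(0),\hat x_{J_{us}}(0)$ and known inputs, whenever $W_u\subseteq J_u$ and $a_y^{J_s}(k)=0$ for all $k\ge0$. $|\cdot|$ is the Euclidean norm. *)

(* Defs.v *)
From HB Require Import structures.
From mathcomp Require Import all_boot all_order all_algebra.
From mathcomp Require Import all_classical all_reals all_analysis.
Set Implicit Arguments. Unset Strict Implicit. Unset Printing Implicit Defensive.
Import Order.TTheory GRing.Theory Num.Theory.
Import numFieldNormedType.Exports.
Local Open Scope classical_set_scope.
Local Open Scope ring_scope.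

Section Defs.
Variable R : realType.

Definition enorm (m : nat) (v : 'cV[R]_m) : R :=
  Num.sqrt (\sum_(i < m) v i 0 ^+ 2).

Definition classK (a : R -> R) : Prop :=
  [/\ {within `[0, +oo[%classic, continuous a},
      a 0 = 0 &
      forall r s : R, 0 <= r -> r < s -> a r < a s].

Definition classKL (b : R -> nat -> R) : Prop :=
  [/\ forall k : nat, classK (fun r => b r k),
      forall (r : R) (k : nat), 0 <= r -> b r k.+1 <= b r k &
      forall r : R, 0 <= r -> b r @ \oo --> (0 : R)].

(* sub-vector indexed by the set J (in increasing index order) *)
Definition subv (m : nat) (J : {set 'I_m}) (v : 'cV[R]_m) : 'cV[R]_#|J| :=
  \col_(i < #|J|) v (enum_val i) 0.

Definition attacked (m : nat) (a : nat -> 'cV[R]_m) : {set 'I_m} :=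
  [set i | `[< exists k : nat, a k i 0 != 0 >]].

Definition is_traj (n nu : nat) (f : 'cV[R]_n -> 'cV[R]_n) (B : 'M[R]_(n, nu))
  (x : nat -> 'cV[R]_n) (u au : nat -> 'cV[R]_nu) : Prop :=
  forall k, x k.+1 = f (x k) + B *m (u k + au k).

Definition outp (n ny : nat) (h : 'cV[R]_n -> 'cV[R]_ny)
  (x : nat -> 'cV[R]_n) (ay : nat -> 'cV[R]_ny) (k : nat) : 'cV[R]_ny :=
  h (x k) + ay k.

Definition obs_map (n nu ny : nat) (Js : {set 'I_ny}) :=
  'cV[R]_n -> 'cV[R]_nu -> 'cV[R]_#|Js| -> 'cV[R]_#|Js| -> 'cV[R]_n.

Definition obs_run (n nu ny : nat) (Js : {set 'I_ny}) (fJ : obs_map n nu Js)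
  (xh : nat -> 'cV[R]_n) (u : nat -> 'cV[R]_nu) (y : nat -> 'cV[R]_ny) : Prop :=
  forall k, xh k.+1 = fJ (xh k) (u k) (subv Js (y k)) (subv Js (y k.+1)).

Definition partial_UIO (n nu ny : nat) (f : 'cV[R]_n -> 'cV[R]_n)
  (h : 'cV[R]_n -> 'cV[R]_ny) (B : 'M[R]_(n, nu))
  (Ju : {set 'I_nu}) (Js : {set 'I_ny}) (fJ : obs_map n nu Js) : Prop :=
  exists beta : R -> nat -> R, classKL beta /\
    forall (x xh : nat -> 'cV[R]_n) (u au : nat -> 'cV[R]_nu)
           (ay : nat -> 'cV[R]_ny),
      is_traj f B x u au ->
      attacked au \subset Ju ->
      (forall k (i : 'I_ny), i \in Js -> ay k i 0 = 0) ->
      obs_run fJ xh u (outp h x ay) ->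
      forall k, enorm (xh k - x k) <= beta (enorm (xh 0 - x 0)) k.

Definition UIO_exist (n nu ny : nat) (f : 'cV[R]_n -> 'cV[R]_n)
  (h : 'cV[R]_n -> 'cV[R]_ny) (B : 'M[R]_(n, nu)) (q1 q2 : nat) : Prop :=
  [/\ (2 * q1 < nu)%N, (0 < ny - 2 * q2)%N &
      forall (Ju : {set 'I_nu}) (Js : {set 'I_ny}),
        (#|Ju| <= 2 * q1)%N -> (ny - 2 * q2 <= #|Js|)%N ->
        exists fJ : obs_map n nu Js, partial_UIO f h B Ju fJ].

Definition pi_fun (n nu ny q1 q2 : nat)
  (xhJ xhS : {set 'I_nu} -> {set 'I_ny} -> nat -> 'cV[R]_n)
  (Ju : {set 'I_nu}) (Js : {set 'I_ny}) (k : nat) : R :=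
  \big[Num.max/0]_(Su : {set 'I_nu} | (Ju \subset Su) && (#|Su| == 2 * q1)%N)
   \big[Num.max/0]_(Ss : {set 'I_ny} | (Ss \subset Js) && (#|Ss| == ny - 2 * q2)%N)
     enorm (xhJ Ju Js k - xhS Su Ss k).

Definition e0_val (n nu ny q1 q2 : nat)
  (xhJ xhS : {set 'I_nu} -> {set 'I_ny} -> nat -> 'cV[R]_n)
  (x : nat -> 'cV[R]_n) : R :=
  Num.max
   (\big[Num.max/0]_(Ju : {set 'I_nu} | #|Ju| == (q1)%N)
     \big[Num.max/0]_(Js : {set 'I_ny} | #|Js| == (ny - q2)%N)
       enorm (xhJ Ju Js 0 - x 0))
   (\big[Num.max/0]_(Su : {set 'I_nu} | #|Su| == (2 * q1)%N)
     \big[Num.max/0]_(Ss : {set 'I_ny} | #|Ss| == (ny - 2 * q2)%N)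
       enorm (xhS Su Ss 0 - x 0)).

End Defs.

(* Main.v *)
Require Import Defs.
From HB Require Import structures.
From mathcomp Require Import all_boot all_order all_algebra.
From mathcomp Require Import all_classical all_reals all_analysis.
From mathcomp Require Import lra zify ring.
Import Order.TTheory GRing.Theory Num.Theory.
Import numFieldNormedType.Exports.
Local Open Scope classical_set_scope.
Local Open Scope ring_scope.

Lemma CS (R : realType) m (F G : 'I_m -> R) :
  (\sum_i F i * G i) ^+ 2 <= (\sum_i F i ^+ 2) * (\sum_i G i ^+ 2).
Proof.
have E : \sum_i \sum_j (F i * G j - F j * G i) ^+ 2 =
   2 * ((\sum_i F i ^+ 2) * (\sum_i G i ^+ 2) - (\sum_i F i * G i) ^+ 2).
  have E1 : (\sum_i F i ^+ 2) * (\sum_i G i ^+ 2) =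
      \sum_i \sum_j F i ^+ 2 * G j ^+ 2.
    by rewrite big_distrl /=; apply: eq_bigr => i _; rewrite big_distrr.
  have E2 : (\sum_i F i ^+ 2) * (\sum_i G i ^+ 2) =
      \sum_i \sum_j F j ^+ 2 * G i ^+ 2.
    by rewrite mulrC big_distrl /=; apply: eq_bigr => i _; rewrite big_distrr /=;
      apply: eq_bigr => j _; rewrite mulrC.
  have E3 : (\sum_i F i * G i) ^+ 2 =
      \sum_i \sum_j (F i * G i) * (F j * G j).
    by rewrite expr2 big_distrl /=; apply: eq_bigr => i _; rewrite big_distrr.
  rewrite mulrBr mulr2n mulrDl mul1r {1}E1 E2 E3 -big_split /= mulr_sumr -sumrB.
  apply: eq_bigr => i _; rewrite -big_split /= mulr_sumr -sumrB.
  by apply: eq_bigr => j _; ring.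
have : 0 <= \sum_i \sum_j (F i * G j - F j * G i) ^+ 2.
  by apply: sumr_ge0 => i _; apply: sumr_ge0 => j _; exact: sqr_ge0.
rewrite E pmulr_rge0 // subr_ge0 //.
Qed.

Lemma enormD (R : realType) m (a b : 'cV[R]_m) :
  enorm (a + b) <= enorm a + enorm b.
Proof.
rewrite /enorm.
set A := \sum_i a i 0 ^+ 2; set B := \sum_i b i 0 ^+ 2.
set C := \sum_i a i 0 * b i 0.
have A0 : 0 <= A by apply: sumr_ge0 => i _; exact: sqr_ge0.
have B0 : 0 <= B by apply: sumr_ge0 => i _; exact: sqr_ge0.
have HC : C <= Num.sqrt A * Num.sqrt B.
  apply: (le_trans (ler_norm C)).
  rewrite -sqrtrM // -sqrtr_sqr ler_sqrt ?mulr_ge0 //; exact: CS.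
have -> : \sum_i (a + b) i 0 ^+ 2 = A + 2 * C + B.
  rewrite /A /B /C mulr_sumr -!big_split /=; apply: eq_bigr => i _.
  rewrite mxE; ring.
rewrite -[X in _ <= X]ger0_norm ?addr_ge0 ?sqrtr_ge0 // -sqrtr_sqr.
rewrite ler_sqrt ?sqr_ge0 //.
have := sqr_sqrtr A0; have := sqr_sqrtr B0.
set sA := Num.sqrt A; set sB := Num.sqrt B => hB hA.
rewrite sqrrD hA hB mulr2n; move: HC; rewrite -/sA -/sB => HC; lra.
Qed.

Lemma enormN (R : realType) m (a : 'cV[R]_m) : enorm (- a) = enorm a.
Proof. by rewrite /enorm; congr Num.sqrt; apply: eq_bigr => i _; rewrite mxE sqrrN. Qed.

Lemma enorm_ge0 (R : realType) m (a : 'cV[R]_m) : 0 <= enorm a.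
Proof. exact: sqrtr_ge0. Qed.

Lemma enorm_tri (R : realType) m (a b c : 'cV[R]_m) :
  enorm (a - b) <= enorm (a - c) + enorm (c - b).
Proof.
have -> : a - b = (a - c) + (c - b) by rewrite addrA subrK.
exact: enormD.
Qed.

Lemma sub_card (T : finType) (A : {set T}) n : (n <= #|A|)%N ->
  exists2 B : {set T}, B \subset A & #|B| = n.
Proof.
move/card_geqP => [s [us ss sA]]; exists [set x in s].
  by apply/fintype.subsetP => x; rewrite inE => /sA.
by rewrite cardsE (card_uniqP us).
Qed.

Lemma sup_card (T : finType) (A : {set T}) n : (#|A| <= n)%N -> (n <= #|T|)%N ->
  exists2 B : {set T}, A \subset B & #|B| = n.
Proof.
move=> h1 h2.
have h3 : (#|T| - n <= #|~: A|)%N by have := cardsC A; lia.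
have [C CA hC] := sub_card _ _ _ h3.
exists (~: C); first by rewrite finset.subsetC.
have := cardsC C; lia.
Qed.

Lemma le_bigmax2 (R : realType) (I : finType) (P : pred I) (F : I -> R) j a :
  P j -> a <= F j -> a <= \big[Num.max/0]_(i | P i) F i.
Proof. by move=> Pj h; apply: le_trans h (le_bigmax_cond _ _ Pj). Qed.

Lemma KL_add (R : realType) (a b : R -> nat -> R) :
  classKL a -> classKL b -> classKL (fun r k => a r k + b r k).
Proof.
move=> [aK ad ac] [bK bd bc]; split.
- move=> k; have [ac1 a0 am] := aK k; have [bc1 b0 bm] := bK k; split.
  + move=> x; apply: continuousD; [exact: ac1|exact: bc1].
  + by rewrite a0 b0 addr0.
  + by move=> r s r0 rs; apply: ltrD; [exact: am|exact: bm].
- by move=> r k r0; apply: lerD; [exact: ad|exact: bd].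
- move=> r r0; have := cvgD (ac r r0) (bc r r0); rewrite addr0; exact.
Qed.

Lemma KL_sum (R : realType) (I : Type) (s : seq I) (b0 : R -> nat -> R)
  (F : I -> R -> nat -> R) :
  classKL b0 -> (forall i, classKL (F i)) ->
  classKL (fun r k => b0 r k + \sum_(i <- s) F i r k).
Proof.
move=> K0 KF; elim: s => [|a s IH].
  have -> : (fun r k => b0 r k + \sum_(i <- [::]) F i r k) = b0.
    by apply/funext => r; apply/funext => k; rewrite big_nil addr0.
  exact: K0.
have -> : (fun r k => b0 r k + \sum_(i <- a :: s) F i r k) =
   (fun r k => F a r k + (b0 r k + \sum_(i <- s) F i r k)).
  by apply/funext => r; apply/funext => k; rewrite big_cons addrCA.
exact: KL_add.
Qed.

Lemma KL_mono (R : realType) (b : R -> nat -> R) r s k :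
  classKL b -> 0 <= r -> r <= s -> b r k <= b s k.
Proof.
move=> [K _ _] r0; rewrite le_eqVlt => /orP [/eqP -> //|rs].
by have [_ _ m] := K k; apply/ltW/m.
Qed.

Lemma KL_ge0 (R : realType) (b : R -> nat -> R) r k :
  classKL b -> 0 <= r -> 0 <= b r k.
Proof.
move=> Kb r0; have [_ b0 _] := (let: And3 K _ _ := Kb in K k).
by rewrite -b0; apply: KL_mono.
Qed.

Lemma le_sum1 (R : realType) (T : finType) (F : T -> R) p :
  (forall p, 0 <= F p) -> F p <= \sum_q F q.
Proof.
move=> h; rewrite (bigD1 p) //= lerDl; exact: sumr_ge0.
Qed.
Theorem theorem2 (R : realType) (n nu ny : nat)
  (f : 'cV[R]_n -> 'cV[R]_n) (h : 'cV[R]_n -> 'cV[R]_ny) (B : 'M[R]_(n, nu))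
  (hB : \rank B = nu)
  (q1 q2 : nat)
  (hq : UIO_exist f h B q1 q2)
  (hqmax : forall q1' q2' : nat, UIO_exist f h B q1' q2' ->
             (q1' <= q1)%N /\ (q2' <= q2)%N)
  (obsJ obsS : forall (Ju : {set 'I_nu}) (Js : {set 'I_ny}), obs_map R n nu Js)
  (hobsJ : forall (Ju : {set 'I_nu}) (Js : {set 'I_ny}), #|Ju| = q1 -> #|Js| = (ny - q2)%N ->
             partial_UIO f h B Ju (obsJ Ju Js))
  (hobsS : forall (Su : {set 'I_nu}) (Ss : {set 'I_ny}), #|Su| = (2 * q1)%N -> #|Ss| = (ny - 2 * q2)%N ->
             partial_UIO f h B Su (obsS Su Ss)) :
  exists betabar : R -> nat -> R, classKL betabar /\
    forall (x : nat -> 'cV[R]_n) (u au : nat -> 'cV[R]_nu)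
           (ay : nat -> 'cV[R]_ny)
           (xhJ xhS : {set 'I_nu} -> {set 'I_ny} -> nat -> 'cV[R]_n)
           (sigma : nat -> {set 'I_nu} * {set 'I_ny}),
      is_traj f B x u au ->
      (#|attacked au| <= q1)%N -> (2 * q1 < nu)%N ->
      (#|attacked ay| <= q2)%N -> (2 * q2 < ny)%N ->
      (forall (Ju : {set 'I_nu}) (Js : {set 'I_ny}), #|Ju| = q1 -> #|Js| = (ny - q2)%N ->
         obs_run (obsJ Ju Js) (xhJ Ju Js) u (outp h x ay)) ->
      (forall (Su : {set 'I_nu}) (Ss : {set 'I_ny}), #|Su| = (2 * q1)%N -> #|Ss| = (ny - 2 * q2)%N ->
         obs_run (obsS Su Ss) (xhS Su Ss) u (outp h x ay)) ->
      (forall k, #|(sigma k).1| = q1 /\ #|(sigma k).2| = (ny - q2)%N /\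
         forall (Ju : {set 'I_nu}) (Js : {set 'I_ny}), #|Ju| = q1 -> #|Js| = (ny - q2)%N ->
           pi_fun q1 q2 xhJ xhS (sigma k).1 (sigma k).2 k
             <= pi_fun q1 q2 xhJ xhS Ju Js k) ->
      forall k : nat,
        enorm (xhJ (sigma k).1 (sigma k).2 k - x k)
          <= betabar (e0_val q1 q2 xhJ xhS x) k.
Proof.
have [hq1 hq2 hq3] := hq.
have [f0 [b0 [Kb0 _]]] : exists fJ : obs_map R n nu [set: 'I_ny],
    partial_UIO f h B (finset.set0 : {set 'I_nu}) fJ.
  by apply: hq3; rewrite ?cards0 // cardsT card_ord leq_subr.
pose T := ({set 'I_nu} * {set 'I_ny})%type.
have : forall p : T, exists b : R -> nat -> R, classKL b /\
   (#|p.1| = q1 -> #|p.2| = (ny - q2)%N ->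
    forall (x xh : nat -> 'cV[R]_n) (u au : nat -> 'cV[R]_nu)
           (ay : nat -> 'cV[R]_ny),
      is_traj f B x u au ->
      attacked au \subset p.1 ->
      (forall k (i : 'I_ny), i \in p.2 -> ay k i 0 = 0) ->
      obs_run (obsJ p.1 p.2) xh u (outp h x ay) ->
      forall k, enorm (xh k - x k) <= b (enorm (xh 0 - x 0)) k).
  move=> p; case: (pselect (#|p.1| = q1 /\ #|p.2| = (ny - q2)%N)) => [[c1 c2]|nc].
    have [b [Kb Hb]] := hobsJ p.1 p.2 c1 c2; exists b; split => // _ _; exact: Hb.
  by exists b0; split => // c1 c2; exfalso; exact: (nc (conj c1 c2)).
case/choice => bJ HbJ.
have : forall p : T, exists b : R -> nat -> R, classKL b /\
   (#|p.1| = (2 * q1)%N -> #|p.2| = (ny - 2 * q2)%N ->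
    forall (x xh : nat -> 'cV[R]_n) (u au : nat -> 'cV[R]_nu)
           (ay : nat -> 'cV[R]_ny),
      is_traj f B x u au ->
      attacked au \subset p.1 ->
      (forall k (i : 'I_ny), i \in p.2 -> ay k i 0 = 0) ->
      obs_run (obsS p.1 p.2) xh u (outp h x ay) ->
      forall k, enorm (xh k - x k) <= b (enorm (xh 0 - x 0)) k).
  move=> p; case: (pselect (#|p.1| = (2 * q1)%N /\ #|p.2| = (ny - 2 * q2)%N)) => [[c1 c2]|nc].
    have [b [Kb Hb]] := hobsS p.1 p.2 c1 c2; exists b; split => // _ _; exact: Hb.
  by exists b0; split => // c1 c2; exfalso; exact: (nc (conj c1 c2)).
case/choice => bS HbS.
have KJ p : classKL (bJ p) by case: (HbJ p).
have KS p : classKL (bS p) by case: (HbS p).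
exists (fun r k => b0 r k + \sum_(p : T) bJ p r k + \sum_(p : T) bS p r k
                   + \sum_(p : T) bS p r k).
split.
  by apply: KL_sum => //; apply: KL_sum => //; apply: KL_sum.
move=> x u au ay xhJ xhS sigma Htraj HWu _ HWy _ HrunJ HrunS Hsig k.
set Wu := attacked au in HWu *; set Wy := attacked ay in HWy *.
set E := e0_val q1 q2 xhJ xhS x.
have clean (Js : {set 'I_ny}) : Js \subset ~: Wy ->
    forall k (i : 'I_ny), i \in Js -> ay k i 0 = 0.
  move=> sub k' i iJ; have := fintype.subsetP sub i iJ.
  rewrite inE /Wy /attacked inE => H; apply/eqP; apply: contraNT H => hne.
  by apply/asboolP; exists k'.
have E0 : 0 <= E.
  by rewrite /E /e0_val le_max; apply/orP; left; apply: bigmax_ge_id.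
have EJ (Ju : {set 'I_nu}) (Js : {set 'I_ny}) : #|Ju| = q1 -> #|Js| = (ny - q2)%N ->
    enorm (xhJ Ju Js 0 - x 0) <= E.
  move=> c1 c2; rewrite /E /e0_val le_max; apply/orP; left.
  apply: (@le_bigmax2 _ _ _ _ Ju); first by rewrite c1.
  by apply: (@le_bigmax2 _ _ _ _ Js); first by rewrite c2.
have ES (Ju : {set 'I_nu}) (Js : {set 'I_ny}) : #|Ju| = (2 * q1)%N -> #|Js| = (ny - 2 * q2)%N ->
    enorm (xhS Ju Js 0 - x 0) <= E.
  move=> c1 c2; rewrite /E /e0_val le_max; apply/orP; right.
  apply: (@le_bigmax2 _ _ _ _ Ju); first by rewrite c1.
  by apply: (@le_bigmax2 _ _ _ _ Js); first by rewrite c2.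
have boundS (Su : {set 'I_nu}) (Ss : {set 'I_ny}) : #|Su| = (2 * q1)%N ->
    #|Ss| = (ny - 2 * q2)%N -> Wu \subset Su -> Ss \subset ~: Wy ->
    enorm (xhS Su Ss k - x k) <= \sum_(p : T) bS p E k.
  move=> c1 c2 s1 s2.
  have [_ H] := HbS (Su, Ss).
  have H1 := H c1 c2 x (xhS Su Ss) u au ay Htraj s1 (clean _ s2) (HrunS _ _ c1 c2) k.
  have H2 := KL_mono _ _ _ _ k (KS (Su, Ss)) (enorm_ge0 _ _ _) (ES _ _ c1 c2).
  apply: (le_trans H1); apply: (le_trans H2).
  by apply: (@le_sum1 _ _ (fun p : T => bS p E k) (Su, Ss)) => p; apply: KL_ge0.
have [Ju HWuJu cJu] : exists2 Ju : {set 'I_nu}, Wu \subset Ju & #|Ju| = q1.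
  by apply: sup_card => //; rewrite card_ord; lia.
have [Js HJs cJs] : exists2 Js : {set 'I_ny}, Js \subset ~: Wy & #|Js| = (ny - q2)%N.
  apply: sub_card; have := cardsC Wy; rewrite card_ord; lia.
have [c1 [c2 Hmin]] := Hsig k.
set su := (sigma k).1 in c1 Hmin *; set ss := (sigma k).2 in c2 Hmin *.
have [Su HSu cSu] : exists2 Su : {set 'I_nu}, su :|: Wu \subset Su & #|Su| = (2 * q1)%N.
  apply: sup_card; last by rewrite card_ord; lia.
  have := cardsU su Wu; lia.
have [Ss HSs cSs] : exists2 Ss : {set 'I_ny}, Ss \subset ss :\: Wy & #|Ss| = (ny - 2 * q2)%N.
  apply: sub_card; rewrite cardsD.
  have := subset_leq_card (finset.subsetIr ss Wy); lia.
have HSu1 : su \subset Su := fintype.subset_trans (finset.subsetUl su Wu) HSu.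
have HSu2 : Wu \subset Su := fintype.subset_trans (finset.subsetUr su Wu) HSu.
have HSs1 : Ss \subset ss := fintype.subset_trans HSs (finset.subsetDl ss Wy).
have HSs2 : Ss \subset ~: Wy.
  apply: (fintype.subset_trans HSs); rewrite finset.setDE; exact: finset.subsetIr.
have St1 := enorm_tri _ _ (xhJ su ss k) (x k) (xhS Su Ss k).
have St2 : enorm (xhJ su ss k - xhS Su Ss k) <= pi_fun q1 q2 xhJ xhS su ss k.
  apply: (@le_bigmax2 _ _ _ _ Su); first by rewrite HSu1 cSu eqxx.
  by apply: (@le_bigmax2 _ _ _ _ Ss); first by rewrite HSs1 cSs eqxx.
have St3 := Hmin Ju Js cJu cJs.
have bJJ : enorm (xhJ Ju Js k - x k) <= \sum_(p : T) bJ p E k.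
  have [_ H] := HbJ (Ju, Js).
  have H1 := H cJu cJs x (xhJ Ju Js) u au ay Htraj HWuJu (clean _ HJs) (HrunJ _ _ cJu cJs) k.
  have H2 := KL_mono _ _ _ _ k (KJ (Ju, Js)) (enorm_ge0 _ _ _) (EJ _ _ cJu cJs).
  apply: (le_trans H1); apply: (le_trans H2).
  by apply: (@le_sum1 _ _ (fun p : T => bJ p E k) (Ju, Js)) => p; apply: KL_ge0.
have sS0 : 0 <= \sum_(p : T) bS p E k.
  by apply: sumr_ge0 => p _; apply: KL_ge0.
have sJ0 : 0 <= \sum_(p : T) bJ p E k.
  by apply: sumr_ge0 => p _; apply: KL_ge0.
have St4 : pi_fun q1 q2 xhJ xhS Ju Js k <= \sum_(p : T) bJ p E k + \sum_(p : T) bS p E k.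
  apply: bigmax_le; first exact: addr_ge0.
  move=> Su' /andP [s1 /eqP c1'].
  apply: bigmax_le; first exact: addr_ge0.
  move=> Ss' /andP [s2 /eqP c2'].
  apply: le_trans (enorm_tri _ _ _ _ (x k)) _.
  apply: lerD => //.
  rewrite -enormN opprB; apply: boundS => //.
    exact: (fintype.subset_trans HWuJu s1).
  exact: (fintype.subset_trans s2 HJs).
have St5 := boundS Su Ss cSu cSs HSu2 HSs2.
have b00 : 0 <= b0 E k by apply: KL_ge0.
rewrite /=; lra.
Qed.
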